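(* If $X$ is an uncountable, zero-dimensional, Borel subspace of a Polish space, then $\mathfrak{s}(X)=\mathfrak{s}(2^\omega)$.
   Context: For infinite sets $U, A$, say $U$ splits $A$ if both $A\cap U$ and $A\setminus U$ are infinite. For a topological space $X$, $\mathfrak{s}(X)$ is the smallest cardinality of a family $\mathcal{U}$ of open subsets of $X$ such that every infinite $A\subseteq X$ is split by some $U\in\mathcal{U}$. $2^\omega$ is the Cantor space. *)

(* Defs.v *)
From HB Require Import structures.
From mathcomp Require Import all_boot all_order all_algebra.
From mathcomp Require Import all_classical all_reals all_analysis.
From mathcomp Require Import Rstruct Rstruct_topology.
From Stdlib Require Import Rdefinitions.
Set Implicit Arguments. Unset Strict Implicit. Unset Printing Implicit Defensive.
Import Order.TTheory GRing.Theory Num.Theory.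
Local Open Scope classical_set_scope.
Local Open Scope ring_scope.

Definition polish_space (Y : topologicalType) : Prop :=
  (exists d : Y -> Y -> R,
    [/\ [/\ (forall x y, 0 <= d x y),
           (forall x y, d x y = 0 <-> x = y),
           (forall x y, d x y = d y x) &
           (forall x y z, d x z <= d x y + d y z)],
        (forall O : set Y, open O <->
           (forall x, O x -> exists2 e : R, 0 < e & [set y | d x y < e] `<=` O)) &
        (forall u : nat -> Y,
           (forall e : R, 0 < e -> exists N : nat,
              forall m n : nat, leq N m -> leq N n -> d (u m) (u n) < e) ->
           exists l : Y, u @ \oo --> l)])
  /\ (exists D : set Y, countable D /\ dense D).

Definition borel_set (Y : topologicalType) (A : set Y) : Prop :=
  <<s (@open Y) >> A.

Definition rel_open (Y : topologicalType) (X W : set Y) : Prop :=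
  exists2 O : set Y, open O & W = O `&` X.

Definition rel_clopen (Y : topologicalType) (X W : set Y) : Prop :=
  W `<=` X /\ rel_open X W /\ rel_open X (X `\` W).

Definition zero_dim_subspace (Y : topologicalType) (X : set Y) : Prop :=
  forall (x : Y) (O : set Y), X x -> open O -> O x ->
    exists W : set Y, [/\ rel_clopen X W, W x & W `<=` O].

Definition splits (T : Type) (U A : set T) : Prop :=
  infinite_set (A `&` U) /\ infinite_set (A `\` U).

Definition splitting_family (Y : topologicalType) (X : set Y)
    (U : set (set Y)) : Prop :=
  (forall W, U W -> rel_open X W) /\
  (forall A : set Y, A `<=` X -> infinite_set A -> exists2 W, U W & splits W A).

(* s(X) <= s(Z) (smallest cardinalities compared, cardinals being well-ordered
   in ZFC): every splitting family for Z has cardinality at least that of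
   some splitting family for X *)
Definition s_le (Y Y' : topologicalType) (X : set Y) (Z : set Y') : Prop :=
  forall V : set (set Y'), splitting_family Z V ->
    exists2 U : set (set Y), splitting_family X U & (U #<= V)%card.

Definition s_eq (Y Y' : topologicalType) (X : set Y) (Z : set Y') : Prop :=
  s_le X Z /\ s_le Z X.

(* Main.v *)
Require Import Defs.
From mathcomp Require Import all_boot all_order all_algebra.
From mathcomp Require Import all_classical all_reals all_analysis.
From mathcomp Require Import Rstruct Rstruct_topology.
From Stdlib Require Import Reals Lra Lia.

Section RLib.
Local Open Scope R_scope.

Definition clip (x : R) : R := Rmax 0 (Rmin x 1).

Lemma clip_ge0 x : 0 <= clip x.
Proof. unfold clip, Rmax, Rmin; repeat destruct Rle_dec; lra. Qed.
Lemma clip_le1 x : clip x <= 1.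
Proof. unfold clip, Rmax, Rmin; repeat destruct Rle_dec; lra. Qed.
Lemma clip_id x : 0 <= x -> x <= 1 -> clip x = x.
Proof. intros; unfold clip, Rmax, Rmin; repeat destruct Rle_dec; lra. Qed.
Lemma clip_mono x y : x <= y -> clip x <= clip y.
Proof. intros; unfold clip, Rmax, Rmin; repeat destruct Rle_dec; lra. Qed.
Lemma clip_sub a b e : a <= b + e -> 0 <= b -> 0 <= e -> clip a <= clip b + clip e.
Proof. intros; unfold clip, Rmax, Rmin; repeat destruct Rle_dec; lra. Qed.
Lemma clip_lt x e : 0 < e -> e <= 1 -> clip x < e -> x < e.
Proof. intros; unfold clip, Rmax, Rmin in *; repeat destruct Rle_dec; lra. Qed.
Lemma clip_small x : 0 <= x -> x < 1 -> clip x = x.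
Proof. intros; apply clip_id; lra. Qed.

Fixpoint Psum (t : nat -> R) (n : nat) : R :=
  match n with O => 0 | S k => Psum t k + (/2)^k * clip (t k) end.

Lemma pow_half_pos k : 0 < (/2)^k.
Proof. apply pow_lt; lra. Qed.
Lemma pow_half_S k : (/2)^(S k) = /2 * (/2)^k.
Proof. reflexivity. Qed.

Lemma Psum_ge0 t n : 0 <= Psum t n.
Proof.
induction n; simpl; [lra|].
pose proof (pow_half_pos n); pose proof (clip_ge0 (t n)); nra.
Qed.

Lemma Psum_le t n : Psum t n <= 2 - 2 * (/2)^n.
Proof.
induction n; simpl; [lra|].
pose proof (pow_half_pos n); pose proof (clip_le1 (t n)); nra.
Qed.

Lemma Psum_mono t n m : (n <= m)%coq_nat -> Psum t n <= Psum t m.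
Proof.
induction 1; [lra|]. simpl.
pose proof (pow_half_pos m); pose proof (clip_ge0 (t m)); nra.
Qed.

Lemma Psum_le3 t u v n : (forall k, clip (t k) <= clip (u k) + clip (v k)) ->
  Psum t n <= Psum u n + Psum v n.
Proof.
intros H; induction n; simpl; [lra|].
pose proof (pow_half_pos n); specialize (H n); nra.
Qed.

Lemma Psum_le2 t u n : (forall k, clip (t k) <= clip (u k)) ->
  Psum t n <= Psum u n.
Proof.
intros H; induction n; simpl; [lra|].
pose proof (pow_half_pos n); specialize (H n); nra.
Qed.

Lemma Psum_tail t eps N n : 0 <= eps ->
  (forall k, (k < N)%coq_nat -> clip (t k) <= eps) ->
  Psum t n <= 2 * eps + 2 * (/2)^N.
Proof.
intros He H.
assert (A : forall m, (m <= N)%coq_nat -> Psum t m <= 2 * eps * (1 - (/2)^m)).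
{ induction m; intros Hm; simpl; [lra|].
  assert (IH := IHm ltac:(lia)). assert (Hk := H m ltac:(lia)).
  pose proof (pow_half_pos m); nra. }
assert (B : forall m, Psum t (Nat.add m N) <= Psum t N + 2 * ((/2)^N - (/2)^(Nat.add m N))).
{ induction m; simpl; [lra|].
  pose proof (pow_half_pos (Nat.add m N)); pose proof (clip_le1 (t (Nat.add m N))); nra. }
destruct (Nat.le_gt_cases n N) as [Hn|Hn].
- pose proof (A n Hn). pose proof (pow_half_pos n). pose proof (pow_half_pos N). nra.
- replace n with (Nat.add (Nat.sub n N) N) by lia.
  pose proof (B (Nat.sub n N)). pose proof (A N (le_n _)).
  pose proof (pow_half_pos N). pose proof (pow_half_pos (Nat.add (Nat.sub n N) N)). nra.
Qed.

Definition PE (t : nat -> R) := fun r => exists n, r = Psum t n.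

Lemma PE_bound t : bound (PE t).
Proof. exists 2. intros r [n ->]. pose proof (Psum_le t n). pose proof (pow_half_pos n). lra. Qed.
Lemma PE_ex t : exists r, PE t r.
Proof. exists 0, 0%nat. reflexivity. Qed.

Definition Ssum (t : nat -> R) : R := proj1_sig (completeness (PE t) (PE_bound t) (PE_ex t)).

Lemma Ssum_ub t n : Psum t n <= Ssum t.
Proof. unfold Ssum. destruct completeness as [m Hm]. simpl. apply Hm. exists n; reflexivity. Qed.

Lemma Ssum_lub t M : (forall n, Psum t n <= M) -> Ssum t <= M.
Proof. intros H. unfold Ssum. destruct completeness as [m Hm]. simpl. apply Hm.
intros r [n ->]. apply H. Qed.

Lemma Ssum_ge0 t : 0 <= Ssum t.
Proof. eapply Rle_trans; [|apply (Ssum_ub t 0)]. simpl; lra. Qed.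

Lemma Ssum_le2 t : Ssum t <= 2.
Proof. apply Ssum_lub. intro n. pose proof (Psum_le t n). pose proof (pow_half_pos n). lra. Qed.

Lemma Ssum_term t k : (/2)^k * clip (t k) <= Ssum t.
Proof. eapply Rle_trans; [|apply (Ssum_ub t (S k))]. simpl. pose proof (Psum_ge0 t k). lra. Qed.

Lemma Ssum_tri t u v : (forall k, clip (t k) <= clip (u k) + clip (v k)) ->
  Ssum t <= Ssum u + Ssum v.
Proof. intros H. apply Ssum_lub. intro n. pose proof (Psum_le3 t u v n H).
pose proof (Ssum_ub u n). pose proof (Ssum_ub v n). lra. Qed.

Lemma Ssum_mono t u : (forall k, clip (t k) <= clip (u k)) -> Ssum t <= Ssum u.
Proof. intros H. apply Ssum_lub. intro n. pose proof (Psum_le2 t u n H).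
pose proof (Ssum_ub u n). lra. Qed.

Lemma Ssum_tail t eps N : 0 <= eps ->
  (forall k, (k < N)%coq_nat -> clip (t k) <= eps) -> Ssum t <= 2 * eps + 2 * (/2)^N.
Proof. intros. apply Ssum_lub. intro n. apply Psum_tail; auto. Qed.

Lemma pow_half_small e : 0 < e -> exists N, (/2)^N < e.
Proof.
intros He. destruct (pow_lt_1_zero (/2) ltac:(rewrite Rabs_pos_eq; lra) e He) as [N HN].
exists N. specialize (HN N (le_n _)). rewrite Rabs_pos_eq in HN; [lra|]. left; apply pow_half_pos.
Qed.

Lemma Ssum_zero t : (forall k, clip (t k) = 0) -> Ssum t = 0.
Proof. intros H. apply Rle_antisym; [|apply Ssum_ge0]. apply Ssum_lub. intros n.
induction n; simpl; [lra|]. rewrite H. lra. Qed.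

Lemma Psum_const t a n : 0 <= a -> (forall k, clip (t k) <= a) -> Psum t n <= 2 * a * (1 - (/2)^n).
Proof. intros Ha H; induction n; simpl; [lra|]. pose proof (pow_half_pos n). specialize (H n). nra. Qed.

Lemma Ssum_const t a : 0 <= a -> (forall k, clip (t k) <= a) -> Ssum t <= 2 * a.
Proof. intros Ha H. apply Ssum_lub. intros n. pose proof (Psum_const t a n Ha H).
pose proof (pow_half_pos n). nra. Qed.

Lemma clip_zero x : 0 <= x -> clip x = 0 -> x = 0.
Proof. intros; unfold clip, Rmax, Rmin in *; repeat destruct Rle_dec; lra. Qed.

Lemma clip_lip a b : Rabs (clip a - clip b) <= Rabs (a - b).
Proof. unfold clip, Rmax, Rmin, Rabs; repeat destruct Rle_dec; repeat destruct Rcase_abs; lra. Qed.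

Lemma clip_le_self x : 0 <= x -> clip x <= x.
Proof. intros; unfold clip, Rmax, Rmin; repeat destruct Rle_dec; lra. Qed.

Lemma inv_diff a b : 0 < a -> 0 < b -> Rabs (/a - /b) = Rabs (a - b) / (a * b).
Proof.
intros Ha Hb. replace (/a - /b) with ((b - a) / (a * b)) by (field; lra).
unfold Rdiv. rewrite Rabs_mult. rewrite (Rabs_pos_eq (/ (a*b))).
- rewrite Rabs_minus_sym. reflexivity.
- left. apply Rinv_0_lt_compat. nra.
Qed.

Lemma inv_cont a b c : 0 < a -> a / 2 <= b -> Rabs (a - b) <= c ->
  Rabs (/a - /b) <= 2 * c / (a * a).
Proof.
intros Ha Hb Hc. assert (Hb0 : 0 < b) by lra. rewrite (inv_diff a b Ha Hb0).
unfold Rdiv. assert (0 < a * b) by nra. assert (a * a / 2 <= a * b) by nra.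
apply Rle_trans with (c * / (a * b)).
- apply Rmult_le_compat_r; [left; apply Rinv_0_lt_compat; lra| lra].
- assert (0 <= c) by (pose proof (Rabs_pos (a - b)); lra).
  assert (/ (a * b) <= 2 * / (a * a)).
  { replace (2 * / (a*a)) with (/ (a * a / 2)) by (field; lra).
    apply Rinv_le_contravar; nra. }
  nra.
Qed.

End RLib.

Definition pick {A : Type} (a0 : A) (P : A -> Prop) : A :=
  match pselect (exists x, P x) with
  | left H => proj1_sig (cid H)
  | right _ => a0 end.

Lemma pickP {A : Type} (a0 : A) (P : A -> Prop) : (exists x, P x) -> P (pick a0 P).
Proof. intros H. unfold pick. destruct pselect as [H'|H']; [|contradiction].
exact (proj2_sig (cid H')). Qed.

Section Metric.
Local Open Scope R_scope.
Variable T : Type.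

Record ismetric (d : T -> T -> R) : Prop := {
  m_pos : forall x y, 0 <= d x y;
  m_eq : forall x y, d x y = 0 <-> x = y;
  m_sym : forall x y, d x y = d y x;
  m_tri : forall x y z, d x z <= d x y + d y z }.

Definition cauchy (d : T -> T -> R) (u : nat -> T) :=
  forall e, 0 < e -> exists N, forall m n, (N <= m)%coq_nat -> (N <= n)%coq_nat -> d (u m) (u n) < e.
Definition conv (d : T -> T -> R) (u : nat -> T) l :=
  forall e, 0 < e -> exists N, forall n, (N <= n)%coq_nat -> d (u n) l < e.
Definition complete (d : T -> T -> R) := forall u, cauchy d u -> exists l, conv d u l.
Definition separable (d : T -> T -> R) := exists q : nat -> T, forall x e, 0 < e -> exists i, d x (q i) < e.
Definition polish (d : T -> T -> R) := ismetric d /\ complete d /\ separable d.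
Definition finer (d' d : T -> T -> R) :=
  forall e, 0 < e -> exists del, 0 < del /\ forall x y, d' x y < del -> d x y < e.
Definition dopen (d : T -> T -> R) (O : T -> Prop) :=
  forall x, O x -> exists e, 0 < e /\ forall y, d x y < e -> O y.

Lemma finer_refl d : finer d d.
Proof. intros e He. exists e. split; auto. Qed.

Lemma finer_trans d1 d2 d3 : finer d1 d2 -> finer d2 d3 -> finer d1 d3.
Proof. intros H12 H23 e He. destruct (H23 e He) as [a [Ha Ha']].
destruct (H12 a Ha) as [b [Hb Hb']]. exists b. split; auto. Qed.

Lemma finer_cauchy d' d u : finer d' d -> cauchy d' u -> cauchy d u.
Proof. intros Hf Hc e He. destruct (Hf e He) as [a [Ha Ha']].
destruct (Hc a Ha) as [N HN]. exists N. intros; auto. Qed.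

Lemma finer_conv d' d u l : finer d' d -> conv d' u l -> conv d u l.
Proof. intros Hf Hc e He. destruct (Hf e He) as [a [Ha Ha']].
destruct (Hc a Ha) as [N HN]. exists N. intros; auto. Qed.

Lemma finer_dopen d' d O : finer d' d -> dopen d O -> dopen d' O.
Proof. intros Hf Ho x Hx. destruct (Ho x Hx) as [e [He He']].
destruct (Hf e He) as [a [Ha Ha']]. exists a. split; auto. Qed.

Lemma conv_unique d u a b : ismetric d -> conv d u a -> conv d u b -> a = b.
Proof.
intros Hm Ha Hb. apply (m_eq d Hm). apply Rle_antisym; [|apply (m_pos d Hm)].
apply Rnot_lt_le. intros Hab.
destruct (Ha (d a b / 2) ltac:(lra)) as [N1 H1].
destruct (Hb (d a b / 2) ltac:(lra)) as [N2 H2].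
specialize (H1 (Nat.max N1 N2) ltac:(lia)). specialize (H2 (Nat.max N1 N2) ltac:(lia)).
pose proof (m_tri d Hm a (u (Nat.max N1 N2)) b) as Ht. rewrite (m_sym d Hm a (u (Nat.max N1 N2))) in Ht. lra.
Qed.

Lemma eventually_all (Q : nat -> nat -> Prop) :
  (forall k, exists M, forall m, (M <= m)%coq_nat -> Q k m) ->
  forall N, exists M, forall k m, (k < N)%coq_nat -> (M <= m)%coq_nat -> Q k m.
Proof.
intros H N. induction N.
- exists 0%nat. intros. lia.
- destruct IHN as [M HM]. destruct (H N) as [M' HM'].
  exists (Nat.max M M'). intros k m Hk Hm.
  destruct (Nat.eq_dec k N) as [->|Hne]; [apply HM'; lia| apply HM; lia].
Qed.

Lemma dense_seq_sub d (q : nat -> T) (y0 : T) (S : T -> Prop) :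
  ismetric d -> (forall x e, 0 < e -> exists i, d x (q i) < e) ->
  exists p : nat -> T, (forall i, S (p i) \/ p i = y0) /\
    forall x e, S x -> 0 < e -> exists i, S (p i) /\ d x (p i) < e.
Proof.
intros Hm Hq.
exists (fun n => match @choice.unpickle (nat * nat)%type n with
  | Some (i, m) => pick y0 (fun y => S y /\ d (q i) y < (/2)^m)
  | None => y0 end).
split.
- intros n. destruct choice.unpickle as [[i m]|]; [|right; reflexivity].
  unfold pick. destruct pselect as [H|H]; [left; exact (proj1 (proj2_sig (cid H)))|right; reflexivity].
- intros x e Sx He. destruct (pow_half_small (e/2) ltac:(lra)) as [m Hm'].
  destruct (Hq x ((/2)^m) (pow_half_pos m)) as [i Hi].
  exists (choice.pickle (i, m)). rewrite choice.pickleK.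
  assert (Hi' : d (q i) x < (/2)^m) by (rewrite (m_sym d Hm); exact Hi).
  assert (Hp := pickP y0 (fun y => S y /\ d (q i) y < (/2)^m)
     (ex_intro _ x (conj Sx Hi'))).
  simpl in Hp. destruct Hp as [Hp1 Hp2]. split; auto.
  pose proof (m_tri d Hm x (q i) (pick y0 (fun y => S y /\ d (q i) y < (/2)^m))). lra.
Qed.

End Metric.
Arguments ismetric {T}. Arguments cauchy {T}. Arguments conv {T}. Arguments complete {T}.
Arguments separable {T}. Arguments polish {T}. Arguments finer {T}. Arguments dopen {T}.
Arguments m_pos {T} d _. Arguments m_eq {T} d _. Arguments m_sym {T} d _. Arguments m_tri {T} d _.
Arguments finer_refl {T}. Arguments finer_trans {T}. Arguments finer_cauchy {T}.
Arguments finer_conv {T}. Arguments finer_dopen {T}. Arguments conv_unique {T}.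
Arguments dense_seq_sub {T}.

Section Join.
Local Open Scope R_scope.
Variables (T : Type) (y0 : T) (d0 : T -> T -> R) (dn : nat -> T -> T -> R).
Hypotheses (Hd0 : ismetric d0) (Hp : forall n, polish (dn n)) (Hf : forall n, finer (dn n) d0).

Definition dJ x y := Ssum (fun k => dn k x y).

Let Hm n : ismetric (dn n) := proj1 (Hp n).

Lemma dJ_metric : ismetric dJ.
Proof.
split.
- intros; apply Ssum_ge0.
- intros x y; split.
  + intros H. apply (m_eq _ (Hm 0)). pose proof (Ssum_term (fun k => dn k x y) 0).
    unfold dJ in H. simpl in H0. apply clip_zero; [apply (m_pos _ (Hm 0))|].
    pose proof (clip_ge0 (dn 0%nat x y)). lra.
  + intros ->. apply Ssum_zero. intros k. rewrite (proj2 (m_eq _ (Hm k) y y) (erefl _)).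
    apply clip_id; lra.
- intros x y. apply Rle_antisym; apply Ssum_mono; intros k; rewrite (m_sym _ (Hm k)); lra.
- intros x y z. apply Ssum_tri. intros k. apply clip_sub; [apply (m_tri _ (Hm k))|apply (m_pos _ (Hm k))|apply (m_pos _ (Hm k))].
Qed.

Lemma dJ_finer n : finer dJ (dn n).
Proof.
intros e He. exists ((/2)^n * Rmin e 1). split.
- pose proof (pow_half_pos n). assert (0 < Rmin e 1) by (apply Rmin_glb_lt; lra). nra.
- intros x y H. pose proof (Ssum_term (fun k => dn k x y) n). unfold dJ in H. simpl in H0.
  assert (clip (dn n x y) < Rmin e 1).
  { pose proof (pow_half_pos n). apply (Rmult_lt_reg_l ((/2)^n)); lra. }
  assert (dn n x y < Rmin e 1).
  { apply clip_lt; [apply Rmin_glb_lt; lra| apply Rmin_r| exact H1]. }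
  pose proof (Rmin_l e 1). lra.
Qed.

Lemma dJ_complete : complete dJ.
Proof.
intros u Hu.
assert (Hl : forall n, exists l, conv (dn n) u l).
{ intros n. apply (proj1 (proj2 (Hp n))). apply (finer_cauchy dJ); [apply dJ_finer|exact Hu]. }
destruct (Hl 0%nat) as [l Hl0]. exists l.
assert (Hall : forall n, conv (dn n) u l).
{ intros n. destruct (Hl n) as [l' Hl'].
  assert (l' = l) as ->; [|exact Hl'].
  apply (conv_unique d0 u); [exact Hd0| apply (finer_conv (dn n)); auto| apply (finer_conv (dn 0%nat)); auto]. }
intros e He.
destruct (pow_half_small (e/4) ltac:(lra)) as [N HN].
destruct (eventually_all (fun k m => dn k (u m) l < e/8)
   (fun k => Hall k (e/8) ltac:(lra)) N) as [M HM].
exists M. intros n Hn. unfold dJ.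
eapply Rle_lt_trans.
- apply (Ssum_tail _ (e/8) N); [lra|]. intros k Hk.
  specialize (HM k n Hk Hn). pose proof (clip_le_self (dn k (u n) l) (m_pos _ (Hm k) _ _)). lra.
- lra.
Qed.

Lemma dJ_sep : separable dJ.
Proof.
assert (Hq : forall k, exists q : nat -> T, forall x e, 0 < e -> exists i, dn k x (q i) < e)
  by (intros k; exact (proj2 (proj2 (Hp k)))).
pose (q := fun k => proj1_sig (cid (Hq k))).
assert (Hqq : forall k x e, 0 < e -> exists i, dn k x (q k i) < e)
  by (intros k; exact (proj2_sig (cid (Hq k)))).
exists (fun n => match @choice.unpickle (nat * seq nat)%type n with
  | Some (m, s) => pick y0 (fun y => forall k, (k < size s)%coq_nat -> dn k (q k (nth 0%nat s k)) y < (/2)^m)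
  | None => y0 end).
intros x e He.
destruct (pow_half_small (e/4) ltac:(lra)) as [N HN].
destruct (pow_half_small (e/8) ltac:(lra)) as [m Hm'].
pose (g := fun k => proj1_sig (cid (Hqq k x ((/2)^m) (pow_half_pos m)))).
assert (Hg : forall k, dn k x (q k (g k)) < (/2)^m)
  by (intros k; exact (proj2_sig (cid (Hqq k x ((/2)^m) (pow_half_pos m))))).
pose (s := map g (iota 0 N)).
assert (Hs : size s = N) by (unfold s; rewrite size_map size_iota; reflexivity).
assert (Hns : forall k, (k < N)%coq_nat -> nth 0%nat s k = g k).
{ intros k Hk. unfold s. rewrite (nth_map 0%nat); [|rewrite size_iota; apply/ltP; exact Hk].
  rewrite nth_iota; [reflexivity|apply/ltP; exact Hk]. }
exists (choice.pickle (m, s)). rewrite choice.pickleK.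
set P := (fun y => forall k, (k < size s)%coq_nat -> dn k (q k (nth 0%nat s k)) y < (/2)^m).
assert (HP : P (pick y0 P)).
{ apply pickP. exists x. intros k Hk. rewrite Hs in Hk. rewrite (Hns k Hk).
  rewrite (m_sym _ (Hm k)). apply Hg. }
unfold dJ. eapply Rle_lt_trans.
- apply (Ssum_tail _ (2 * (/2)^m) N); [pose proof (pow_half_pos m); lra|].
  intros k Hk. eapply Rle_trans; [apply clip_le_self; apply (m_pos _ (Hm k))|].
  pose proof (m_tri _ (Hm k) x (q k (g k)) (pick y0 P)).
  assert (Hk' : (k < size s)%coq_nat) by (rewrite Hs; exact Hk).
  specialize (HP k Hk'). rewrite (Hns k Hk) in HP. specialize (Hg k). lra.
- lra.
Qed.

Lemma join_polish : polish dJ.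
Proof. split; [apply dJ_metric|split; [apply dJ_complete|apply dJ_sep]]. Qed.

End Join.

Section Refine.
Local Open Scope R_scope.
Variables (T : Type) (y0 : T) (d : T -> T -> R) (O : T -> Prop).
Hypotheses (Hp : polish d) (HO : dopen d O).

Let Hm : ismetric d := proj1 Hp.
Let q : nat -> T := proj1_sig (cid (proj2 (proj2 Hp))).
Let Hq : forall x e, 0 < e -> exists i, d x (q i) < e := proj2_sig (cid (proj2 (proj2 Hp))).

Definition psi k x := match @choice.unpickle (nat * nat)%type k with
  | Some (i, m) => if pselect (forall y, d (q i) y < (/2)^m -> O y)
                   then clip ((/2)^m - d (q i) x) else 0
  | None => 0 end.

Lemma psi_range k x : 0 <= psi k x <= 1.
Proof. unfold psi. destruct choice.unpickle as [[i m]|]; [|lra].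
destruct pselect; simpl; [|lra]. split; [apply clip_ge0|apply clip_le1]. Qed.

Lemma psi_lip k x y : Rabs (psi k x - psi k y) <= d x y.
Proof.
unfold psi. destruct choice.unpickle as [[i m]|].
2:{ rewrite Rminus_0_r Rabs_R0. apply (m_pos d Hm). }
destruct pselect; simpl. 2:{ rewrite Rminus_0_r Rabs_R0. apply (m_pos d Hm). }
eapply Rle_trans; [apply clip_lip|].
pose proof (m_tri d Hm (q i) x y). pose proof (m_tri d Hm (q i) y x).
rewrite (m_sym d Hm y x) in H0.
unfold Rabs; destruct Rcase_abs; lra.
Qed.

Definition fO x := Ssum (fun k => psi k x).

Lemma fO_lip x y : fO x <= fO y + 2 * d x y.
Proof.
unfold fO. eapply Rle_trans.
- apply (Ssum_tri (fun k => psi k x) (fun k => psi k y) (fun k => Rabs (psi k x - psi k y))).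
  intros k. pose proof (psi_range k x). pose proof (psi_range k y).
  rewrite (clip_id (psi k x)); try lra. rewrite (clip_id (psi k y)); try lra.
  rewrite clip_id; [| apply Rabs_pos|]; unfold Rabs; destruct Rcase_abs; lra.
- apply Rplus_le_compat_l. apply Ssum_const; [apply (m_pos d Hm)|].
  intros k. eapply Rle_trans; [apply clip_le_self; apply Rabs_pos|apply psi_lip].
Qed.

Lemma fO_pos x : O x -> 0 < fO x.
Proof.
intros Ox. destruct (HO x Ox) as [e [He He']].
destruct (pow_half_small (e/2) ltac:(lra)) as [m Hm'].
destruct (Hq x ((/2)^m) (pow_half_pos m)) as [i Hi].
pose (k := choice.pickle (i, m)).
assert (Hk : psi k x = clip ((/2)^m - d (q i) x)).
{ unfold psi, k. rewrite choice.pickleK. destruct pselect as [Hy0|Hn]; simpl; [reflexivity|].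
  exfalso. apply Hn. intros y Hy. apply He'. pose proof (m_tri d Hm x (q i) y). lra. }
assert (0 < psi k x).
{ rewrite Hk. rewrite (m_sym d Hm) in Hi. unfold clip, Rmax, Rmin; repeat destruct Rle_dec; lra. }
pose proof (Ssum_term (fun k => psi k x) k). simpl in H0.
pose proof (pow_half_pos k). pose proof (psi_range k x).
rewrite (clip_id (psi k x)) in H0; try lra. unfold fO. nra.
Qed.

Lemma fO_O x : 0 < fO x -> O x.
Proof.
intros H. destruct (pselect (O x)) as [Ox|Hn]; [exact Ox|]. exfalso. assert (fO x = 0); [|lra].
unfold fO. apply Ssum_zero. intros k. unfold psi.
destruct choice.unpickle as [[i m]|]; [|apply clip_id; lra].
destruct pselect as [Hb|]; simpl; [|apply clip_id; lra].
assert (Hc : clip ((/2)^m - d (q i) x) = 0).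
{ destruct (Rlt_dec (d (q i) x) ((/2)^m)) as [Hlt|Hge].
  - exfalso. apply Hn. apply Hb. exact Hlt.
  - unfold clip, Rmax, Rmin; repeat destruct Rle_dec; lra. }
rewrite Hc. apply clip_id; lra.
Qed.

Definition hO x := if pselect (O x) then / fO x else 0.
Definition chiO x := if pselect (O x) then 1 else 0.
Definition dR x y := d x y + clip (Rabs (hO x - hO y)) + Rabs (chiO x - chiO y).

Lemma chi_same x y : Rabs (chiO x - chiO y) < 1 -> (O x <-> O y).
Proof. unfold chiO. destruct (pselect (O x)); simpl; destruct (pselect (O y)); simpl; try tauto;
unfold Rabs; destruct Rcase_abs; lra. Qed.

Lemma dR_ge x y : d x y <= dR x y.
Proof. unfold dR. pose proof (clip_ge0 (Rabs (hO x - hO y))). pose proof (Rabs_pos (chiO x - chiO y)). lra. Qed.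

Lemma dR_metric : ismetric dR.
Proof.
split.
- intros x y. pose proof (dR_ge x y). pose proof (m_pos d Hm x y). lra.
- intros x y. split.
  + intros H. apply (m_eq d Hm). pose proof (dR_ge x y). pose proof (m_pos d Hm x y).
    unfold dR in H. pose proof (clip_ge0 (Rabs (hO x - hO y))). pose proof (Rabs_pos (chiO x - chiO y)). lra.
  + intros ->. unfold dR. rewrite (proj2 (m_eq d Hm y y) (erefl _)). rewrite !Rminus_diag Rabs_R0.
    rewrite clip_id; lra.
- intros x y. unfold dR. rewrite (m_sym d Hm x y) (Rabs_minus_sym (hO x)) (Rabs_minus_sym (chiO x)). reflexivity.
- intros x y z. unfold dR. pose proof (m_tri d Hm x y z).
  assert (clip (Rabs (hO x - hO z)) <= clip (Rabs (hO x - hO y)) + clip (Rabs (hO y - hO z))).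
  { apply clip_sub; try apply Rabs_pos. replace (hO x - hO z) with ((hO x - hO y) + (hO y - hO z)) by ring.
    apply Rabs_triang. }
  assert (Rabs (chiO x - chiO z) <= Rabs (chiO x - chiO y) + Rabs (chiO y - chiO z)).
  { replace (chiO x - chiO z) with ((chiO x - chiO y) + (chiO y - chiO z)) by ring. apply Rabs_triang. }
  lra.
Qed.

Lemma dR_finer : finer dR d.
Proof. intros e He. exists e. split; auto. intros x y H. pose proof (dR_ge x y). lra. Qed.

Lemma dR_open : dopen dR O.
Proof. intros x Ox. exists 1. split; [lra|]. intros y H.
assert (Rabs (chiO x - chiO y) < 1).
{ unfold dR in H. pose proof (m_pos d Hm x y). pose proof (clip_ge0 (Rabs (hO x - hO y))). lra. }
apply (chi_same x y H0). exact Ox. Qed.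

Lemma dR_open' : dopen dR (fun x => ~ O x).
Proof. intros x Ox. exists 1. split; [lra|]. intros y H.
assert (Rabs (chiO x - chiO y) < 1).
{ unfold dR in H. pose proof (m_pos d Hm x y). pose proof (clip_ge0 (Rabs (hO x - hO y))). lra. }
intros Oy. apply Ox. apply (chi_same x y H0). exact Oy. Qed.

Lemma hO_cont x : O x -> forall e, 0 < e -> exists del, 0 < del /\
  forall y, O y -> d x y < del -> Rabs (hO x - hO y) < e.
Proof.
intros Ox e He.
set a := fO x. assert (Hf : 0 < a) by (apply fO_pos; exact Ox).
exists (Rmin (a / 4) (e * a * a / 4)). split.
{ apply Rmin_glb_lt; [lra|]. unfold Rdiv. apply Rmult_lt_0_compat; [apply Rmult_lt_0_compat; [apply Rmult_lt_0_compat|]|]; lra. }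
intros y Oy Hy. pose proof (Rmin_l (a/4) (e*a*a/4)). pose proof (Rmin_r (a/4) (e*a*a/4)).
unfold hO. destruct (pselect (O x)); simpl; [|contradiction]. destruct (pselect (O y)); simpl; [|contradiction].
pose proof (fO_lip x y). pose proof (fO_lip y x). rewrite (m_sym d Hm y x) in H2.
assert (Habs : Rabs (a - fO y) <= 2 * d x y) by (unfold Rabs; destruct Rcase_abs; fold a in H1, H2; lra).
eapply Rle_lt_trans; [apply (inv_cont a (fO y) (2 * d x y)); auto; fold a in H1, H2; lra|].
assert (0 < a * a) by nra.
apply (Rmult_lt_reg_r (a * a)); auto. unfold Rdiv. rewrite Rmult_assoc Rinv_l; [|lra]. nra.
Qed.

Lemma dR_complete : complete dR.
Proof.
intros u Hu.
destruct (proj1 (proj2 Hp) u (finer_cauchy dR d u dR_finer Hu)) as [l Hl].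
exists l.
destruct (Hu (1/2) ltac:(lra)) as [N0 HN0].
assert (Hside : forall m, (N0 <= m)%coq_nat -> (O (u m) <-> O (u N0))).
{ intros m Hmm. apply chi_same. specialize (HN0 m N0 Hmm (le_n _)). unfold dR in HN0.
  pose proof (m_pos d Hm (u m) (u N0)). pose proof (clip_ge0 (Rabs (hO (u m) - hO (u N0)))). lra. }
destruct (pselect (O (u N0))) as [OuN|OuN].
-
  set H := hO (u N0) + 1/2.
  assert (Hb : forall m, (N0 <= m)%coq_nat -> hO (u m) <= H).
  { intros m Hmm. specialize (HN0 m N0 Hmm (le_n _)). unfold dR in HN0.
    pose proof (m_pos d Hm (u m) (u N0)). pose proof (Rabs_pos (chiO (u m) - chiO (u N0))).
    assert (Hc : clip (Rabs (hO (u m) - hO (u N0))) < 1/2) by lra.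
    apply clip_lt in Hc; [|lra|lra]. unfold H. unfold Rabs in Hc; destruct Rcase_abs; lra. }
  assert (HfN : forall m, (N0 <= m)%coq_nat -> / H <= fO (u m)).
  { intros m Hmm. pose proof (Hb m Hmm). pose proof (fO_pos _ (proj2 (Hside m Hmm) OuN)).
    unfold hO in H0. destruct (pselect (O (u m))) as [Hy0|Hn]; simpl in H0 |- *; [|exfalso; apply Hn; apply (Hside m Hmm); exact OuN].
    assert (0 < / fO (u m)) by (apply Rinv_0_lt_compat; lra).
    assert (0 < H) by lra.
    rewrite <- (Rinv_inv (fO (u m))). apply Rinv_le_contravar; lra. }
  assert (HH : 0 < H).
  { pose proof (Hb N0 (le_n _)). pose proof (fO_pos _ OuN). unfold hO in H0.
    destruct (pselect (O (u N0))); simpl in H0 |- *; [|contradiction].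
    assert (0 < / fO (u N0)) by (apply Rinv_0_lt_compat; lra). lra. }
  assert (Ol : O l).
  { apply fO_O. destruct (Hl (/ H / 4) ltac:(apply Rmult_lt_0_compat; [apply Rinv_0_lt_compat; lra|lra])) as [N1 HN1].
    pose (m := Nat.max N0 N1). specialize (HN1 m ltac:(lia)). specialize (HfN m ltac:(lia)).
    pose proof (fO_lip (u m) l). assert (0 < / H) by (apply Rinv_0_lt_compat; lra). lra. }
  intros e He.
  destruct (hO_cont l Ol (e/3) ltac:(lra)) as [del [Hdel Hdel']].
  destruct (Hl (Rmin del (e/3)) ltac:(apply Rmin_glb_lt; lra)) as [N1 HN1].
  exists (Nat.max N0 N1). intros n Hn.
  specialize (HN1 n ltac:(lia)). pose proof (Rmin_l del (e/3)). pose proof (Rmin_r del (e/3)).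
  assert (Oun : O (u n)) by (apply (Hside n ltac:(lia)); exact OuN).
  specialize (Hdel' (u n) Oun ltac:(rewrite (m_sym d Hm); lra)).
  unfold dR. rewrite (Rabs_minus_sym (hO (u n))).
  assert (chiO (u n) = chiO l) as ->.
  { unfold chiO. destruct (pselect (O (u n))); simpl; destruct (pselect (O l)); simpl; tauto. }
  rewrite Rminus_diag Rabs_R0.
  pose proof (clip_le_self (Rabs (hO l - hO (u n))) (Rabs_pos _)). lra.
-
  assert (Ol : ~ O l).
  { intros Ol. destruct (HO l Ol) as [e [He He']].
    destruct (Hl e He) as [N1 HN1]. pose (m := Nat.max N0 N1).
    specialize (HN1 m ltac:(lia)). rewrite (m_sym d Hm) in HN1.
    apply OuN. apply (Hside m ltac:(lia)). apply He'. exact HN1. }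
  intros e He. destruct (Hl e He) as [N1 HN1]. exists (Nat.max N0 N1). intros n Hn.
  specialize (HN1 n ltac:(lia)).
  assert (Oun : ~ O (u n)) by (intros Hx; apply OuN; apply (Hside n ltac:(lia)); exact Hx).
  unfold dR, hO, chiO. destruct (pselect (O (u n))); simpl; [contradiction|].
  destruct (pselect (O l)); simpl; [contradiction|].
  rewrite !Rminus_diag Rabs_R0. rewrite clip_id; lra.
Qed.

Lemma dR_sep : separable dR.
Proof.
destruct (dense_seq_sub d q y0 O Hm Hq) as [pO [_ HpO]].
destruct (dense_seq_sub d q y0 (fun x => ~ O x) Hm Hq) as [pF [_ HpF]].
exists (fun n => match @choice.unpickle (bool * nat)%type n with
  | Some (true, i) => pO i | Some (false, i) => pF i | None => y0 end).
intros x e He. destruct (pselect (O x)) as [Ox|Ox].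
- destruct (hO_cont x Ox (e/2) ltac:(lra)) as [del [Hdel Hdel']].
  destruct (HpO x (Rmin del (e/2)) Ox ltac:(apply Rmin_glb_lt; lra)) as [i [Hi1 Hi2]].
  exists (choice.pickle (true, i)). rewrite choice.pickleK.
  pose proof (Rmin_l del (e/2)). pose proof (Rmin_r del (e/2)).
  specialize (Hdel' (pO i) Hi1 ltac:(lra)).
  unfold dR. assert (chiO x = chiO (pO i)) as ->.
  { unfold chiO. destruct (pselect (O x)); simpl; destruct (pselect (O (pO i))); simpl; tauto. }
  rewrite Rminus_diag Rabs_R0.
  pose proof (clip_le_self (Rabs (hO x - hO (pO i))) (Rabs_pos _)). lra.
- destruct (HpF x e Ox He) as [i [Hi1 Hi2]].
  exists (choice.pickle (false, i)). rewrite choice.pickleK.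
  unfold dR, hO, chiO. destruct (pselect (O x)); simpl; [contradiction|].
  destruct (pselect (O (pF i))); simpl; [contradiction|].
  rewrite !Rminus_diag Rabs_R0. rewrite clip_id; lra.
Qed.

Lemma refine_open_ex : exists d', polish d' /\ finer d' d /\ dopen d' O /\ dopen d' (fun x => ~ O x).
Proof.
exists dR. split; [split; [apply dR_metric|split; [apply dR_complete|apply dR_sep]]|].
split; [apply dR_finer|split; [apply dR_open|apply dR_open']].
Qed.

End Refine.

Local Open Scope classical_set_scope.


Lemma countable_subset T (A B : set T) : A `<=` B -> countable B -> countable A.
Proof. by move=> AB; apply: sub_countable; apply: subset_card_le. Qed.

Arguments countable_subset {T A B}.

Lemma countableU2 T (A B : set T) : countable A -> countable B -> countable (A `|` B).
Proof.
move=> cA cB.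
have : countable (\bigcup_(i in [set: bool]) (if i then A else B)).
  by apply: bigcup_countable => // -[].
apply: countable_subset => x [Ax|Bx]; [exists true | exists false] => //.
Qed.

Arguments countableU2 {T A B}.

Lemma uncountable_minus T (S C : set T) : ~ countable S -> countable C ->
  ~ countable (fun x => S x /\ ~ C x).
Proof.
move=> nS cC cSC; apply: nS.
apply: (countable_subset _ (countableU2 cSC cC)) => x Sx.
by case: (pselect (C x)) => Cx; [right | left].
Qed.

Arguments uncountable_minus {T S C}.

Lemma two_points T (S : set T) : ~ countable S -> exists a b, S a /\ S b /\ a <> b.
Proof.
move=> nS. case: (pselect (exists a, S a)) => [[a Sa]|nE].
  case: (pselect (exists b, S b /\ a <> b)) => [[b [Sb ab]]|nb].
    by exists a, b.
  exfalso; apply: nS; apply: (countable_subset _ (countable1 a)) => x Sx.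
  by case: (pselect (a = x)) => [->//|ax]; exfalso; apply: nb; exists x.
exfalso; apply: nS; apply: (countable_subset _ (countable0 T)) => x Sx.
by apply: nE; exists x.
Qed.

Arguments two_points {T S}.

Lemma pow_half_le (N k : nat) : (N <= k)%coq_nat -> ((/2)^k <= (/2)^N)%R.
Proof.
induction 1; [apply Rle_refl|]. simpl. pose proof (pow_half_pos m). lra.
Qed.

Section Perfect.
Local Open Scope R_scope.
Variables (T : Type) (y0 : T) (d : T -> T -> R) (B : T -> Prop).
Hypotheses (Hp : polish d) (HB : dopen d (fun x => ~ B x)) (HBu : ~ countable (B : set T)).

Let Hm : ismetric d := proj1 Hp.
Let q : nat -> T := proj1_sig (cid (proj2 (proj2 Hp))).
Let Hq : forall x e, 0 < e -> exists i, d x (q i) < e := proj2_sig (cid (proj2 (proj2 Hp))).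

Definition cond x := forall e, 0 < e -> ~ countable (fun y => B y /\ d x y < e).

Definition NC := fun x => B x /\ ~ cond x.

Lemma NC_countable : countable (NC : set T).
Proof.
pose Bb := fun k : nat * nat => (fun y => B y /\ d (q k.1) y < (/2)^(k.2)) : set T.
have : countable (\bigcup_(k in (fun k => countable (Bb k)) : set (nat * nat)) Bb k).
  by apply: bigcup_countable.
apply: countable_subset => x [Bx ncx].
have [e [He Hc]] : exists e, 0 < e /\ countable (fun y => B y /\ d x y < e).
  apply: contrapT => Hn; apply: ncx => e He Hc; apply: Hn; by exists e; split.
have [m Hm'] := pow_half_small (e/2) ltac:(lra).
have [i Hi] := Hq x ((/2)^m) (pow_half_pos m).
exists (i, m) => /=.
  apply: (countable_subset _ Hc) => y [By Hy]; simpl in Hy; split => //.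
  have := m_tri d Hm x (q i) y; lra.
by split => //; rewrite (m_sym d Hm); exact Hi.
Qed.

Lemma cond_split c r : cond c -> 0 < r -> exists a0 a1,
  cond a0 /\ cond a1 /\ B a0 /\ B a1 /\ d c a0 < r /\ d c a1 < r /\ a0 <> a1.
Proof.
move=> cc hr.
have := uncountable_minus (cc r hr) NC_countable.
move=> /two_points [a0 [a1 [[[B0 d0] n0] [[[B1 d1] n1] ne]]]].
exists a0, a1.
refine (conj _ (conj _ (conj B0 (conj B1 (conj d0 (conj d1 ne)))))).
- by apply: contrapT => h; apply: n0.
- by apply: contrapT => h; apply: n1.
Qed.

Lemma cond_exists : exists c, cond c /\ B c.
Proof.
have := uncountable_minus HBu NC_countable.
move=> /two_points [a [_ [[Ba na] _]]].
by exists a; split => //; apply: contrapT => h; apply: na.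
Qed.

Definition splitP (c : T) (r : R) := fun p : T * T =>
  cond p.1 /\ cond p.2 /\ B p.1 /\ B p.2 /\ d c p.1 < r / 2 /\ d c p.2 < r / 2 /\ p.1 <> p.2.

Definition child (s : T * R) (bit : bool) : T * R :=
  let p := pick (s.1, s.1) (splitP s.1 s.2) in
  (if bit then p.2 else p.1, Rmin (s.2 / 4) (d p.1 p.2 / 3)).

Definition c0 := pick y0 (fun c => cond c /\ B c).

Fixpoint node (b : nat -> bool) (n : nat) : T * R :=
  match n with O => (c0, 1) | S k => child (node b k) (b k) end.

Definition Inv (s : T * R) := cond s.1 /\ B s.1 /\ 0 < s.2.

Lemma child_spec s bit : Inv s -> Inv (child s bit) /\
   d s.1 (child s bit).1 < s.2 / 2 /\ (child s bit).2 <= s.2 / 4 /\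
   (child s bit).2 = Rmin (s.2 / 4) (d (pick (s.1, s.1) (splitP s.1 s.2)).1 (pick (s.1, s.1) (splitP s.1 s.2)).2 / 3).
Proof.
move=> [cs [Bs rs]].
have [a0 [a1 H]] := cond_split _ _ cs (ltac:(lra) : 0 < s.2 / 2).
have HP : splitP s.1 s.2 (pick (s.1, s.1) (splitP s.1 s.2)).
  apply: pickP; exists (a0, a1); rewrite /splitP /=.
  move: H => [h1 [h2 [h3 [h4 [h5 [h6 h7]]]]]].
  refine (conj h1 (conj h2 (conj h3 (conj h4 (conj _ (conj _ h7)))))); lra.
move: HP; rewrite /child /=.
set p := pick _ _ => -[cp1 [cp2 [Bp1 [Bp2 [dp1 [dp2 np]]]]]].
have dpos : 0 < d p.1 p.2.
  have := m_pos d Hm p.1 p.2 => h; case: (Rle_lt_or_eq_dec _ _ h) => // h'.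
  by exfalso; apply: np; apply/(m_eq d Hm); rewrite h'.
split; [|split; [|split]].
- split; [by case: bit| split; [by case: bit|]]; apply: Rmin_glb_lt; lra.
- by case: bit.
- exact: Rmin_l.
- by [].
Qed.

Lemma node_inv b n : Inv (node b n).
Proof.
elim: n => [|n IH] /=.
  rewrite /Inv /= /c0; have := pickP y0 (fun c => cond c /\ B c) cond_exists; move=> [h1 h2]; split => //; split => //; lra.
by have [] := child_spec _ (b n) IH.
Qed.

Lemma node_step b n : d (node b n).1 (node b n.+1).1 < (node b n).2 / 2 /\
  (node b n.+1).2 <= (node b n).2 / 4.
Proof. have [_ [h1 [h2 _]]] := child_spec _ (b n) (node_inv b n). by split. Qed.

Lemma node_rad b n : (node b n).2 <= (/2)^n.
Proof.
elim: n => [|n IH] /=; first lra.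
have [_ h] := node_step b n. have := node_inv b n => -[_ [_ r]]. simpl in h. lra.
Qed.

Lemma node_nest b n k : d (node b n).1 (node b (Nat.add k n)).1 + (node b (Nat.add k n)).2 <= (node b n).2.
Proof.
elim: k => [|k IH] /=.
  by rewrite (proj2 (m_eq d Hm _ _) (erefl _)); lra.
have [h1 h2] := node_step b (Nat.add k n).
have := m_tri d Hm (node b n).1 (node b (Nat.add k n)).1 (node b (Nat.add k n).+1).1.
have := node_inv b (Nat.add k n) => -[_ [_ r]].
simpl in h1, h2 |- *. lra.
Qed.

Lemma node_close b n m : (n <= m)%coq_nat -> d (node b n).1 (node b m).1 <= (node b n).2.
Proof.
move=> h. have -> : m = Nat.add (m - n)%coq_nat n by lia.
have := node_nest b n (m - n)%coq_nat. have := node_inv b (Nat.add (m - n)%coq_nat n) => -[_ [_ r]]. lra.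
Qed.

Lemma node_cauchy b : cauchy d (fun n => (node b n).1).
Proof.
move=> e he. have [N hN] := pow_half_small e he. exists N => m n hm hn.
have hr k : (N <= k)%coq_nat -> (node b k).2 < e.
  move=> hk. have := node_rad b k. have := pow_half_le _ _ hk. lra.
case: (Nat.le_gt_cases m n) => hmn.
  have := node_close b _ _ hmn. have := hr m hm. lra.
rewrite (m_sym d Hm). have := node_close b _ _ (Nat.lt_le_incl _ _ hmn). have := hr n hn. lra.
Qed.

Definition emb (b : nat -> bool) : T := pick y0 (conv d (fun n => (node b n).1)).

Lemma emb_conv b : conv d (fun n => (node b n).1) (emb b).
Proof. apply: pickP. exact: (proj1 (proj2 Hp) _ (node_cauchy b)). Qed.

Lemma emb_close b n : d (node b n).1 (emb b) <= (node b n).2.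
Proof.
apply: Rnot_lt_le => h.
set eps := d (node b n).1 (emb b) - (node b n).2.
have [N hN] := emb_conv b eps ltac:(rewrite /eps; lra).
pose m := Nat.max n N.
have := hN m ltac:(rewrite /m; lia).
have := node_close b _ _ (ltac:(rewrite /m; lia) : (n <= m)%coq_nat).
have := m_tri d Hm (node b n).1 (node b m).1 (emb b).
rewrite /eps; lra.
Qed.

Lemma emb_B b : B (emb b).
Proof.
apply: contrapT => nB. have [e [he he']] := HB _ nB.
have [N hN] := emb_conv b e he. apply: (he' (node b N).1).
  by rewrite (m_sym d Hm); apply: hN.
by have := node_inv b N => -[_ [? _]].
Qed.

Lemma node_agree b b' n : (forall i, (i < n)%coq_nat -> b' i = b i) ->
  forall k, (k <= n)%coq_nat -> node b' k = node b k.
Proof.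
move=> h; elim => [|k IH] hk //=.
by rewrite IH; [rewrite h //; lia | lia].
Qed.

Lemma emb_cont b n b' : (forall i, (i < n)%coq_nat -> b' i = b i) ->
  d (emb b) (emb b') <= 2 * (/2)^n.
Proof.
move=> h. have := node_agree _ _ _ h n (le_n n) => e.
have := emb_close b n. have := emb_close b' n. rewrite e => h1 h2.
have := m_tri d Hm (emb b) (node b n).1 (emb b'). rewrite (m_sym d Hm (emb b) (node b n).1).
have := node_rad b n. lra.
Qed.

Lemma emb_inj b b' : emb b = emb b' -> b = b'.
Proof.
move=> he. apply: functional_extensionality_dep.
suff : forall n, (forall i, (i < n)%coq_nat -> b' i = b i) by move=> H x; symmetry; apply: (H x.+1); lia.
elim => [|n IH] i hi; first lia.
case: (Nat.eq_dec i n) => [->|hn]; last by apply: IH; lia.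
have ag := node_agree _ _ _ IH n (le_n n).
apply: contrapT => hne.
set s := node b n.
have hs : Inv s by apply: node_inv.
set p := pick (s.1, s.1) (splitP s.1 s.2).
have [a0 [a1 H]] := cond_split _ _ (proj1 hs) (ltac:(case: hs => _ [_ ?]; lra) : 0 < s.2 / 2).
have HP : splitP s.1 s.2 p.
  apply: pickP; exists (a0, a1); rewrite /splitP /=.
  case: hs => _ [_ ?]; move: H => [h1 [h2 [h3 [h4 [h5 [h6 h7]]]]]].
  refine (conj h1 (conj h2 (conj h3 (conj h4 (conj _ (conj _ h7)))))); lra.
move: HP => [_ [_ [_ [_ [_ [_ np]]]]]].
have c1 := emb_close b n.+1. have c2 := emb_close b' n.+1.
rewrite /= ag -/s in c2. rewrite /= -/s in c1.
rewrite /child -/p /= in c1 c2.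
have hr := Rmin_r (s.2 / 4) (d p.1 p.2 / 3).
have tri := m_tri d Hm p.1 p.2 (emb b).
have tri2 := m_tri d Hm p.2 p.1 (emb b).
rewrite -he in c2.
have hpos := m_pos d Hm p.1 p.2.
have hz : d p.1 p.2 = 0.
  move: c1 c2 hne; case: (b n); case: (b' n) => // c1 c2 _.
    rewrite (m_sym d Hm p.2 p.1) in tri2.
    have : d p.1 p.2 <= d p.1 (emb b) + d (emb b) p.2 by apply: m_tri.
    rewrite (m_sym d Hm (emb b) p.2). lra.
  have : d p.1 p.2 <= d p.1 (emb b) + d (emb b) p.2 by apply: m_tri.
  rewrite (m_sym d Hm (emb b) p.2). lra.
by apply: np; apply/(m_eq d Hm).
Qed.

End Perfect.

Section BorelC.
Local Open Scope R_scope.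
Variables (T : Type) (y0 : T) (d0 : T -> T -> R).
Hypothesis Hp0 : polish d0.

Definition Cls (B : T -> Prop) := exists d', polish d' /\ finer d' d0 /\ dopen d' B /\ dopen d' (fun x => ~ B x).

Lemma Cls_open O : dopen d0 O -> Cls O.
Proof.
intros HO. destruct (refine_open_ex T y0 d0 O Hp0 HO) as [d' [H1 [H2 [H3 H4]]]].
exists d'. auto.
Qed.

Lemma Cls_compl B : Cls B -> Cls (fun x => ~ B x).
Proof.
intros [d' [H1 [H2 [H3 H4]]]]. exists d'. split; [auto|split; [auto|split; [auto|]]].
intros x Hx. assert (Bx : B x) by (apply contrapT; exact Hx).
destruct (H3 x Bx) as [e [He He']]. exists e. split; auto.
Qed.

Lemma Cls_empty : Cls (fun _ => False).
Proof.
exists d0. split; [auto|split; [apply finer_refl|split]].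
- intros x [].
- intros x _. exists 1. split; [lra|]. intros y _ [].
Qed.

Lemma Cls_union (Bn : nat -> T -> Prop) : (forall n, Cls (Bn n)) -> Cls (fun x => exists n, Bn n x).
Proof.
intros H.
pose (dn := fun n => proj1_sig (cid (H n))).
assert (Hdn : forall n, polish (dn n) /\ finer (dn n) d0 /\ dopen (dn n) (Bn n) /\ dopen (dn n) (fun x => ~ Bn n x))
  by (intros n; exact (proj2_sig (cid (H n)))).
assert (HJ : polish (dJ T dn)).
{ apply (join_polish T y0 d0 dn (proj1 Hp0)); intros n; apply Hdn. }
assert (HO : dopen (dJ T dn) (fun x => exists n, Bn n x)).
{ intros x [n Hx]. destruct (finer_dopen (dJ T dn) (dn n) (Bn n) (dJ_finer T dn n) (proj1 (proj2 (proj2 (Hdn n)))) x Hx) as [e [He He']].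
  exists e. split; auto. intros y Hy. exists n. auto. }
destruct (refine_open_ex T y0 (dJ T dn) _ HJ HO) as [d' [H1 [H2 [H3 H4]]]].
exists d'. split; [auto|split; [|auto]].
apply (finer_trans d' (dJ T dn)); auto.
apply (finer_trans (dJ T dn) (dn 0%nat)); [apply dJ_finer|apply Hdn].
Qed.

Theorem Cls_perfect B : Cls B -> ~ countable (B : set T) ->
  exists e : (nat -> bool) -> T, (forall b, B (e b)) /\ (forall b b', e b = e b' -> b = b') /\
    (forall b eps, 0 < eps -> exists n, forall b', (forall i, (i < n)%coq_nat -> b' i = b i) -> d0 (e b) (e b') < eps).
Proof.
intros [d' [H1 [H2 [H3 H4]]]] Hu.
exists (emb T y0 d' B). split; [|split].
- apply emb_B; auto.
- apply emb_inj; auto.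
- intros b eps Heps. destruct (H2 eps Heps) as [del [Hdel Hdel']].
  destruct (pow_half_small (del/2) ltac:(lra)) as [n Hn].
  exists n. intros b' Hb'. apply Hdel'.
  pose proof (emb_cont T y0 d' B H1 Hu b n b' Hb'). lra.
Qed.

End BorelC.

Lemma polish_space_conv (Y : topologicalType) (y0 : Y) : polish_space Y ->
  exists d : Y -> Y -> R, polish d /\ (forall O : set Y, open O <-> dopen d O).
Proof.
case=> [[d [[h1 h2 h3 h4] Hopen Hcompl]] Hsep]. exists d.
have Hm : ismetric d.
  split.
  - by move=> x y; apply/RleP; apply: h1.
  - exact: h2.
  - exact: h3.
  - by move=> x y z; apply/RleP; apply: h4.
have Hod : forall O : set Y, open O <-> dopen d O.
  move=> O; rewrite Hopen; split.
  - move=> H x Ox. have [e /RltP he he'] := H x Ox. exists e; split => // y hy.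
    by apply: he' => /=; apply/RltP.
  - move=> H x Ox. have [e [he he']] := H x Ox. exists e; first by apply/RltP.
    by move=> y /= /RltP hy; apply: he'.
have Hbo : forall x e, open (fun y => (d x y < e)%R).
  move=> x e; apply/Hod => z hz. exists (e - d x z)%R; split; first lra.
  move=> y hy. have := m_tri d Hm x z y. lra.
have dxx : forall x, d x x = 0%R by move=> x; exact: (proj2 (m_eq d Hm x x) (erefl x)).
split; last exact: Hod.
split; first exact: Hm.
split.
- move=> u hu. case: (Hcompl u) => [e /RltP he|l hl].
    have [N hN] := hu e he. exists N => m n /leP hm /leP hn.
    by apply/RltP; apply: hN.
  exists l => e he.
  have bo := Hbo l e.
  have lin : (d l l < e)%R by rewrite dxx.
  have := hl _ (open_nbhs_nbhs (conj bo lin)).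
  move=> [N _ HN]. exists N => n /leP hn. rewrite (m_sym d Hm). exact: (HN n hn).
- case: Hsep => D [cD dD].
  have [z0 Dz0] : exists z, D z.
    have := dD (fun y => (d y0 y < 1)%R).
    case.
    + by exists y0 => /=; rewrite dxx; lra.
    + exact: Hbo.
    by move=> z [_ ?]; exists z.
  have [f finj] := countable_injP _ cD.
  exists (fun n => pick z0 (fun x => D x /\ f x = n)) => x e he.
  have [z [hz Dz]] : exists z, (d x z < e)%R /\ D z.
    have := dD (fun y => (d x y < e)%R).
    case.
    + by exists x => /=; rewrite dxx; lra.
    + exact: Hbo.
    by move=> z [? ?]; exists z.
  exists (f z).
  have := pickP z0 (fun x => D x /\ f x = f z) (ex_intro _ z (conj Dz (erefl _))).
  move=> [Dp fp]. have -> : pick z0 (fun x => D x /\ f x = f z) = z.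
    by apply: finj => //; apply/mem_set.
  exact: hz.
Qed.

Lemma cyl_nbhs (b : cantor_space) (n : nat) :
  nbhs b [set c : cantor_space | forall i, (i < n)%N -> b i = c i].
Proof.
have FF : ProperFilter (nbhs b) by apply: nbhs_pfilter.
elim: n => [|n IH]; first by apply: filterS (@filterT _ _ FF) => z _ i; rewrite ltn0.
have Hn : nbhs b (proj n @^-1` [set b n] : set cantor_space).
  apply: open_nbhs_nbhs; split => //.
  apply: open_comp; [move=> + _; exact: proj_continuous| apply: discrete_open].
apply: filterS (@filterI _ _ FF _ _ IH Hn) => z [H1 H2] i.
rewrite ltnS leq_eqVlt => /predU1P[->|hi]; last exact: H1.
by rewrite -H2.
Qed.

Lemma open_cyl (W : set cantor_space) (b : cantor_space) : open W -> W b ->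
  exists n, forall c : cantor_space, (forall i, (i < n)%N -> b i = c i) -> W c.
Proof.
move=> oW Wb. apply: contrapT => hn.
have hs : forall n, exists c : cantor_space, (forall i, (i < n)%N -> b i = c i) /\ ~ W c.
  move=> n. apply: contrapT => hc. apply: hn. exists n => c hc'.
  apply: contrapT => nW. apply: hc. by exists c.
pose s := fun n => proj1_sig (cid (hs n)).
have hsP : forall n, (forall i, (i < n)%N -> b i = s n i) /\ ~ W (s n).
  move=> n. exact: (proj2_sig (cid (hs n))).
have cv : s @ \oo --> (b : cantor_space).
  apply/pointwise_cvgP => t.
  move=> A /= hA. have Abt : A (b t) by apply: nbhs_singleton.
  exists t.+1 => // n /= hk. by rewrite -(proj1 (hsP n) t hk).
have := cv W (open_nbhs_nbhs (conj oW Wb)).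
move=> [N _ HN]. apply: (proj2 (hsP N)). exact: (HN N (leqnn N)).
Qed.

Lemma pick_or {A : Type} (a0 : A) (P : A -> Prop) : P (pick a0 P) \/ pick a0 P = a0.
Proof. rewrite /pick; case: pselect => [H|H]; [left; exact: (proj2_sig (cid H))|right => //]. Qed.

Lemma rel_clopen0 (Y : topologicalType) (X : set Y) : rel_clopen X set0.
Proof.
split; first by [].
split.
- exists set0; first exact: open0. by rewrite set0I.
- exists setT; first exact: openT. by rewrite setD0 setTI.
Qed.

Lemma separation (Y : topologicalType) (X : set Y) (d : Y -> Y -> R) (q : nat -> Y) :
  ismetric d -> (forall O : set Y, open O <-> dopen d O) ->
  (forall x e, (0 < e)%R -> exists i, (d x (q i) < e)%R) ->
  zero_dim_subspace X ->
  exists C : nat -> set Y, (forall k, rel_clopen X (C k)) /\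
    forall x y, X x -> X y -> x <> y -> exists k, C k x /\ ~ C k y.
Proof.
move=> Hm Hod Hq Hz.
pose Bl := fun k : nat * nat => (fun y => (d (q k.1) y < (/2)^k.2)%R) : set Y.
have Bl_open : forall k, open (Bl k).
  move=> [i m]; apply/Hod => z hz. exists ((/2)^m - d (q i) z)%R; split; first by rewrite /Bl /= in hz; lra.
  move=> y hy. rewrite /Bl /=. have := m_tri d Hm (q i) z y. lra.
pose Good := fun k : (nat * nat) * (nat * nat) => fun W : set Y =>
  rel_clopen X W /\ W `<=` Bl k.1 /\ exists O, open O /\ W = O `&` X /\ Bl k.2 `<=` O.
exists (fun n => match @choice.unpickle ((nat * nat) * (nat * nat))%type n with
  | Some k => pick set0 (Good k) | None => set0 end).
split.
  move=> n. case: choice.unpickle => [k|]; last exact: rel_clopen0.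
  case: (pick_or set0 (Good k)) => [[h _]|->]; [exact: h| exact: rel_clopen0].
move=> x y Xx Xy nxy.
have dpos : (0 < d x y)%R.
  have := m_pos d Hm x y => h. case: (Rle_lt_or_eq_dec _ _ h) => // h'.
  by exfalso; apply: nxy; apply/(m_eq d Hm); rewrite h'.
have [m hm] := pow_half_small (d x y / 3) ltac:(lra).
have [i hi] := Hq x ((/2)^m)%R (pow_half_pos m).
have B1x : Bl (i, m) x by rewrite /Bl /= (m_sym d Hm); exact: hi.
have [W [cW Wx WB]] := Hz x (Bl (i, m)) Xx (Bl_open (i, m)) B1x.
case: (proj1 (proj2 cW)) => O1 oO WO.
have Ox : O1 x by move: Wx; rewrite WO => -[].
have [e [he he']] := proj1 (Hod O1) oO x Ox.
have [l hl] := pow_half_small (e / 2) ltac:(lra).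
have [j hj] := Hq x ((/2)^l)%R (pow_half_pos l).
have G : Good ((i, m), (j, l)) W.
  split; first exact: cW. split; first exact: WB.
  exists O1; split => //; split => // z hz. apply: he'.
  rewrite /Bl /= in hz. have := m_tri d Hm x (q j) z. lra.
exists (choice.pickle ((i, m), (j, l))). rewrite choice.pickleK.
have [cW2 [W2B [P2 [oP2 [W2O B2O2]]]]] : Good ((i, m), (j, l)) (pick set0 (Good ((i, m), (j, l)))).
  by apply: pickP; exists W.
split.
- rewrite W2O; split; last exact: Xx. apply: B2O2. rewrite /Bl /= (m_sym d Hm). exact: hj.
- move=> /W2B. rewrite /Bl /=. have := m_tri d Hm x (q i) y. rewrite (m_sym d Hm x (q i)).
  move: hi; rewrite (m_sym d Hm x (q i)) => hi. lra.
Qed.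

Lemma inj_infinite {A B : Type} (g : A -> B) (S : set A) :
  {in S &, injective g} -> infinite_set S -> infinite_set (g @` S).
Proof.
move=> ginj iS fS. apply: iS.
by rewrite -(eq_finite_set (inj_card_eq ginj)).
Qed.

Lemma transfer {A B : Type} (g : A -> B) (SA : set A) (SB : set B)
  (h : set B -> set A) (V : set (set B)) :
  {in SA &, injective g} -> (forall a, SA a -> SB (g a)) ->
  (forall W a, SA a -> (h W a <-> W (g a))) ->
  (forall A', A' `<=` SB -> infinite_set A' -> exists2 W, V W & splits W A') ->
  forall A', A' `<=` SA -> infinite_set A' -> exists2 W', (h @` V) W' & splits W' A'.
Proof.
move=> ginj gS hP HV A' AS iA.
have ginj' : {in A' &, injective g}.
  by move=> a b /set_mem Aa /set_mem Bb; apply: ginj; apply/mem_set; apply: AS.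
have igA := inj_infinite g A' ginj' iA.
have gAS : g @` A' `<=` SB by move=> _ [a Aa <-]; apply: gS; apply: AS.
have [W VW [s1 s2]] := HV (g @` A') gAS igA.
exists (h W); first by exists W.
split.
- move=> fin. apply: s1. apply: (sub_finite_set _ (finite_image g fin)).
  move=> _ [[a Aa <-] Wga]. exists a => //. split => //. by apply/(hP W a (AS a Aa)).
- move=> fin. apply: s2. apply: (sub_finite_set _ (finite_image g fin)).
  move=> _ [[a Aa <-] Wga]. exists a => //. split => //. by move/(hP W a (AS a Aa)).
Qed.

Lemma open_finI (Y : topologicalType) (P : nat -> set Y) (n : nat) :
  (forall k, open (P k)) -> open [set y | forall k, (k < n)%N -> P k y].
Proof.
move=> oP. elim: n => [|n IH].
  have -> : [set y | forall k, (k < 0)%N -> P k y] = setT.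
    by apply: funext => y; apply: propext; split => // _ k; rewrite ltn0.
  exact: openT.
have -> : [set y | forall k, (k < n.+1)%N -> P k y] = [set y | forall k, (k < n)%N -> P k y] `&` P n.
  apply: funext => y; apply: propext; split.
    by move=> H; split; [move=> k hk; apply: H; rewrite ltnS ltnW | apply: H].
  move=> [H1 H2] k. rewrite ltnS leq_eqVlt => /predU1P[->|hk]; [exact: H2|exact: H1].
exact: openI.
Qed.

Lemma preimage_rel_open (Y : topologicalType) (X : set Y) (C : nat -> set Y) (W : set cantor_space) :
  (forall k, rel_clopen X (C k)) -> open W ->
  rel_open X ((fun y => (fun k => `[< C k y >]) : cantor_space) @^-1` W `&` X).
Proof.
move=> Ccl oW.
set f := (fun y => (fun k => `[< C k y >]) : cantor_space).
have hOC : forall k, exists2 O, open O & C k = O `&` X by move=> k; exact: (proj1 (proj2 (Ccl k))).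
have hOD : forall k, exists2 O, open O & X `\` C k = O `&` X by move=> k; exact: (proj2 (proj2 (Ccl k))).
pose OC := fun k => proj1_sig (cid2 (hOC k)).
pose OD := fun k => proj1_sig (cid2 (hOD k)).
have oOC : forall k, open (OC k) by move=> k; exact: (proj1 (proj2_sig (cid2 (hOC k)))).
have eOC : forall k, C k = OC k `&` X by move=> k; exact: (proj2 (proj2_sig (cid2 (hOC k)))).
have oOD : forall k, open (OD k) by move=> k; exact: (proj1 (proj2_sig (cid2 (hOD k)))).
have eOD : forall k, X `\` C k = OD k `&` X by move=> k; exact: (proj2 (proj2_sig (cid2 (hOD k)))).
pose N := fun x => pick 0%N (fun n => forall c : cantor_space, (forall i, (i < n)%N -> f x i = c i) -> W c).
pose cyl := fun x => [set y | forall k, (k < N x)%N -> (if `[< C k x >] then OC k else OD k) y].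
exists (\bigcup_(x in [set x | X x /\ W (f x)]) cyl x).
  apply: bigcup_open => x _. apply: open_finI => k. by case: ifP.
have inC : forall k y, X y -> C k y -> OC k y.
  by move=> k y Xy Cy; move: Cy; rewrite eOC => -[].
have inD : forall k y, X y -> ~ C k y -> OD k y.
  move=> k y Xy Cy. have : (X `\` C k) y by split.
  by rewrite eOD => -[].
apply: funext => y; apply: propext; split.
- move=> [Wfy Xy]; split => //. exists y => //. move=> k _.
  by case: (asboolP (C k y)) => h; [apply: inC | apply: inD].
- move=> [[x [Xx Wfx] hc] Xy]; split => //.
  have hN : forall c : cantor_space, (forall i, (i < N x)%N -> f x i = c i) -> W c.
    apply: (pickP 0%N (fun n => forall c : cantor_space, (forall i, (i < n)%N -> f x i = c i) -> W c)).
    exact: open_cyl.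
  apply: hN => i hi. have := hc i hi. rewrite /f.
  case: (asboolP (C i x)) => hx.
  + move=> hy. have : C i y by rewrite eOC.
    by move=> h; apply/esym/asboolP.
  + move=> hy. have : (X `\` C i) y by rewrite eOD.
    by move=> [_ h]; apply/esym/asboolPn.
Qed.

Theorem lemma2p3 (Y : topologicalType) (X : set Y) :
  polish_space Y -> borel_set X -> ~ countable X -> zero_dim_subspace X ->
  s_eq X [set: cantor_space].
Proof.
move=> Hpol HB Hunc Hz.
have [y0 X0] : exists y, X y.
  apply: contrapT => hn. apply: Hunc. apply: (countable_subset _ (countable0 Y)) => x Xx.
  by apply: hn; exists x.
have [d [Hp Hod]] := polish_space_conv Y y0 Hpol.
have Hm := proj1 Hp.
have [q Hq] := proj2 (proj2 Hp).
have HC : Cls Y d X.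
  apply: (HB (fun B => Cls Y d B)). split.
  - split.
    + have -> : (set0 : set Y) = xpredp0 by [].
      exact: Cls_empty.
    + move=> A CA. have -> : setT `\` A = (fun x => ~ A x).
        by apply: funext => x; apply: propext; split => [[]|] //.
      exact: Cls_compl.
    + move=> A CA. have -> : \bigcup_k A k = (fun x => exists n, A n x).
        apply: funext => x; apply: propext; split => [[n _ h]|[n h]]; by exists n.
      exact: Cls_union.
  - move=> O oO. apply: Cls_open => //. exact/Hod.
have [e [eX [einj econt]]] := Cls_perfect Y y0 d X HC Hunc.
have eop : forall O, open O -> @open cantor_space (e @^-1` O).
  move=> O oO. rewrite openE => b Ob. rewrite /interior.
  have [eps [heps heps']] := proj1 (Hod O) oO (e b) Ob.
  have [n hn] := econt b eps heps.
  apply: filterS (cyl_nbhs b n) => c hc. apply: heps'. apply: hn => i /ltP hi.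
  by rewrite hc.
have [C [Ccl Csep]] := separation Y X d q Hm Hod Hq Hz.
split.
- move=> V [Vop Vsp].
  pose f := (fun y => (fun k => `[< C k y >]) : cantor_space).
  exists ((fun W => f @^-1` W `&` X) @` V); last exact: card_image_le.
  split.
  + move=> _ [W VW <-]. apply: preimage_rel_open => //.
    have [P oP ->] := Vop W VW. by rewrite setIT.
  + move=> A AX iA. apply: (transfer f X setT (fun W => f @^-1` W `&` X) V) => //.
    * move=> x y /set_mem Xx /set_mem Xy hf. apply: contrapT => nxy.
      have [k [Ckx nCky]] := Csep x y Xx Xy nxy.
      have := congr1 (fun g : cantor_space => g k) hf. rewrite /f /=.
      case: (asboolP (C k x)) => // _. by case: (asboolP (C k y)).
    * move=> W a Xa. split; [by case | by move=> h; split].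
- move=> V [Vop Vsp].
  exists ((fun W => e @^-1` W) @` V); last exact: card_image_le.
  split.
  + move=> _ [W VW <-]. have [P oP ->] := Vop W VW.
    exists (e @^-1` P); first exact: eop.
    rewrite setIT. apply: funext => b; apply: propext; split; first by case.
    by move=> h; split => //; apply: eX.
  + move=> A _ iA. apply: (transfer e setT X (fun W => e @^-1` W) V) => //.
    * by move=> a b _ _; apply: einj.
Qed.
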